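(* Let $\mathbb{F}$ be a finite field and $n\ge2$. Let $\mathcal{F}: 0\subsetneq V_1\subsetneq V_2=\mathbb{F}^n$ and $\mathcal{F}': 0\subsetneq V'_1\subsetneq V'_2=\mathbb{F}^n$ be two flags of length $2$. Then the semigroups $\varphi(\mathcal{F})$ and $\varphi(\mathcal{F}')$ are isomorphic if and only if $\{\dim V_1,\dim(V_2/V_1)\}=\{\dim V'_1,\dim(V'_2/V'_1)\}$.
   Context: $M(n,\mathbb{F})$ is the semigroup of $n\times n$ matrices over $\mathbb{F}$, identified with linear operators on $\mathbb{F}^n$. For a flag $\mathcal{F}: 0=V_0\subsetneq V_1\subsetneq\cdots\subsetneq V_k=\mathbb{F}^n$, $\varphi(\mathcal{F})=\{a\in M(n,\mathbb{F}) : a(V_i)\subseteq V_{i-1}\text{ for all } i=1,\dots,k\}$. Isomorphism means semigroup isomorphism. *)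

(* Defs.v *)
From HB Require Import structures.
From mathcomp Require Import all_boot all_order all_algebra.
Set Implicit Arguments. Unset Strict Implicit. Unset Printing Implicit Defensive.
Import GRing.Theory.
Local Open Scope ring_scope.

(* Matrices 'M[F]_n act on row vectors by right multiplication: v |-> v *m a.
   Subspaces of F^n are represented by row spaces of matrices (mxalgebra, %MS).
   A flag of length 2: 0 < V1 < V2 = F^n, with V1 : 'M[F]_n (row space).
   phi2 V1 = { a | a(V2) <= V1 and a(V1) <= V0 = 0 }. *)
Definition phi2 (F : fieldType) (n : nat) (V1 : 'M[F]_n) : pred 'M[F]_n :=
  [pred a : 'M[F]_n | (1%:M *m a <= V1)%MS && (V1 *m a <= (0 : 'M[F]_n))%MS].

Definition semigroup_isomorphic (F : fieldType) (n : nat)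
    (S T : pred 'M[F]_n) : Prop :=
  exists f : 'M[F]_n -> 'M[F]_n,
    [/\ {in S, forall x, f x \in T},
        {in S &, injective f},
        {in T, forall y, exists2 x, x \in S & f x = y}
      & {in S &, forall x y, f (x *m y) = f x *m f y}].

(* Main.v *)
Require Import Defs.
From HB Require Import structures.
From mathcomp Require Import all_boot all_order all_algebra zify.
Set Implicit Arguments. Unset Strict Implicit. Unset Printing Implicit Defensive.
Import GRing.Theory.
Local Open Scope ring_scope.

Section S.
Variable F : finFieldType.
Variable n : nat.
Implicit Types V W a b : 'M[F]_n.

Lemma phi2P V a : (a \in phi2 V) = (a <= V)%MS && (V *m a == 0).
Proof. by rewrite inE /= mul1mx submx0. Qed.

Lemma phi2_null V a b : a \in phi2 V -> b \in phi2 V -> a *m b = 0.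
Proof.
move=> /[!phi2P] /andP[/submxP[D ->] _] /andP[_ /eqP Hb].
by rewrite -mulmxA Hb mulmx0.
Qed.

Lemma phi2_0 V : 0 \in phi2 V.
Proof. by rewrite phi2P sub0mx mulmx0 eqxx. Qed.

Lemma phi2_eqmx V W : (V :=: W)%MS -> phi2 V =i phi2 W.
Proof.
move=> eVW a; rewrite !phi2P eVW -!submx0.
by rewrite (eqmxMr a eVW).
Qed.

Lemma subUl (P : 'M[F]_n) m (c : 'M[F]_n) (X : 'M[F]_(m, n)) :
  P \in unitmx -> (P *m c <= X)%MS = (c <= X)%MS.
Proof.
move=> uP; apply/idP/idP => H.
  apply: submx_trans H; rewrite -{1}(mulKmx uP c); exact: submxMl.
apply: submx_trans H; exact: submxMl.
Qed.

Lemma phi2_conj V P : P \in unitmx -> #|phi2 (V *m P)| = #|phi2 V|.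
Proof.
move=> uP.
pose g := fun c : 'M[F]_n => P *m c *m invmx P.
pose h := fun c : 'M[F]_n => invmx P *m c *m P.
have bg : bijective g.
  exists h => c; rewrite /g /h.
    by rewrite !mulmxA mulVmx // mul1mx mulmxKV.
  by rewrite !mulmxA mulmxV // mul1mx mulmxK.
rewrite -[RHS](on_card_preimset (onW_bij (phi2 V) bg)).
apply: eq_card => c; rewrite [in RHS]in_set !phi2P.
congr andb.
  rewrite /g -(submxMfree (P *m c *m invmx P) V (_ : row_free P)) ?row_free_unit //.
  by rewrite mulmxKV // subUl.
rewrite /g !mulmxA; apply/eqP/eqP => H.
  by rewrite H mul0mx.
by rewrite -(mulmxKV uP (V *m P *m c)) H mul0mx.
Qed.


Lemma pid_diag k : (pid_mx k : 'M[F]_n) = diag_mx (\row_j ((j < k)%N)%:R).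
Proof.
apply/matrixP=> i j; rewrite !mxE.
case: (eqVneq i j) => [->|ne]; first by rewrite eqxx mulr1n.
by rewrite mulr0n val_eqE (negbTE ne).
Qed.

Lemma phi2_pid k b : (k <= n)%N ->
  reflect (forall (i j : 'I_n), ~~((k <= i)%N && (j < k)%N) -> b i j = 0)
          (b \in phi2 (pid_mx k)).
Proof.
move=> kn; rewrite phi2P.
have -> : (b <= (pid_mx k : 'M[F]_n))%MS = (b *m (pid_mx k : 'M[F]_n) == b).
  apply/idP/idP => [/submxP[D ->]|/eqP <-]; last exact: submxMl.
  by rewrite -mulmxA pid_mx_id.
rewrite pid_diag mul_mx_diag mul_diag_mx.
apply: (iffP andP) => [[/eqP/matrixP H1 /eqP/matrixP H2] i j|H].
  rewrite negb_and -ltnNge => /orP[ik|jk].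
    by move: (H2 i j); rewrite !mxE ik mul1r.
  by move: (H1 i j); rewrite !mxE (negbTE jk) mulr0 => <-.
split; apply/eqP/matrixP => i j; rewrite !mxE.
  case jk: (j < k)%N; first by rewrite mulr1.
  by rewrite mulr0 H // jk andbF.
case ik: (i < k)%N; last by rewrite mul0r.
by rewrite H ?mulr0 // leqNgt ik.
Qed.

Lemma card_lt k : (k <= n)%N -> #|[set j : 'I_n | (j < k)%N]| = k.
Proof.
move=> kn; rewrite -[RHS](card_ord k).
have wi : injective (widen_ord kn).
  by move=> x y E; apply: val_inj; exact: (congr1 val E).
rewrite -(card_image wi); apply: eq_card => j; rewrite inE.
apply/idP/imageP => [jk|[x _ ->]]; last by rewrite /= ltn_ord.
by exists (Ordinal jk) => //; apply: val_inj.
Qed.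

Lemma card_ge k : (k <= n)%N -> #|[set j : 'I_n | (k <= j)%N]| = (n - k)%N.
Proof.
move=> kn; have := cardsC [set j : 'I_n | (j < k)%N].
rewrite card_ord card_lt // => E.
rewrite -[in RHS]E addKn; apply: eq_card => j; by rewrite !inE leqNgt.
Qed.

Lemma card_phi2_pid k : (k <= n)%N ->
  #|phi2 (pid_mx k : 'M[F]_n)| = (#|F| ^ ((n - k) * k))%N.
Proof.
move=> kn.
pose D := setX [set i : 'I_n | (k <= i)%N] [set j : 'I_n | (j < k)%N].
pose ffm := fun b : 'M[F]_n => ([ffun ij => b ij.1 ij.2] : {ffun 'I_n * 'I_n -> F}).
have bf : bijective ffm.
  exists (fun f : {ffun 'I_n * 'I_n -> F} => \matrix_(i < n, j < n) f (i, j)) => [b|f].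
    by apply/matrixP => i j; rewrite !(mxE, ffunE).
  by apply/ffunP => -[i j]; rewrite !(mxE, ffunE).
transitivity #|pffun_on (0 : F) (mem D) predT|.
  rewrite -[RHS](on_card_preimset (onW_bij _ bf)); apply: eq_card => b.
  rewrite in_set; apply/(phi2_pid b kn)/pffun_onP => [H|[/supportP Hs _] i j nD].
    split=> //; apply/supportP => -[i j]; rewrite ffunE in_setX !inE /=.
    exact: H.
  by have := Hs (i, j); rewrite ffunE in_setX !inE /=; apply.
by rewrite card_pffun_on cardsX card_ge // card_lt.
Qed.

Lemma card_phi2 V : #|phi2 V| = (#|F| ^ ((n - \rank V) * \rank V))%N.
Proof.
have kn := rank_leq_row V.
have [P uP eV] := eq_rank_unitmx (rank_pid_mx F kn kn : \rank (pid_mx (\rank V) : 'M[F]_n) = \rank V).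
by rewrite (eq_card (phi2_eqmx eV)) phi2_conj // card_phi2_pid.
Qed.

End S.

Lemma bij0 (T : finType) (S1 S2 : pred T) z :
  z \in S1 -> z \in S2 -> #|S1| = #|S2| ->
  exists f : T -> T, [/\ f z = z, {in S1, forall x, f x \in S2},
     {in S1 &, injective f} & {in S2, forall y, exists2 x, x \in S1 & f x = y}].
Proof.
move=> z1 z2 c12.
pose s1 := enum [predD1 S1 & z]; pose s2 := enum [predD1 S2 & z].
have u1 : uniq s1 := enum_uniq _.
have u2 : uniq s2 := enum_uniq _.
have m1 x : (x \in s1) = (x != z) && (x \in S1) by rewrite mem_enum inE.
have m2 x : (x \in s2) = (x != z) && (x \in S2) by rewrite mem_enum inE.
have sz : size s1 = size s2.
  have := cardD1 z S1; have := cardD1 z S2; rewrite z1 z2 c12 /s1 /s2 -!cardE.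
  by move=> -> /addnI ->.
pose f x := nth z s2 (index x s1).
have fout x : x \notin s1 -> f x = z.
  by move=> xn; rewrite /f (memNindex xn) nth_default // sz.
have fin x : x \in s1 -> f x \in s2.
  by move=> xi; rewrite /f mem_nth // -sz index_mem.
have fz : f z = z by rewrite fout // m1 eqxx.
exists f; split=> //.
- move=> x xS; case: (boolP (x \in s1)) => [/fin|/fout ->//].
  by rewrite m2 => /andP[].
- move=> x y xS yS.
  case: (boolP (x \in s1)) => xi; case: (boolP (y \in s1)) => yi.
  + move/eqP; rewrite /f nth_uniq ?(sz, index_mem) -?sz ?index_mem // => /eqP E.
    by rewrite -(nth_index z xi) E nth_index.
  + rewrite (fout y yi) => E; have := fin x xi; by rewrite m2 E eqxx.
  + rewrite (fout x xi) => E; have := fin y yi; by rewrite m2 -E eqxx.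
  + by move: xi yi; rewrite !m1 xS yS !andbT !negbK => /eqP-> /eqP->.
- move=> y yS; case: (eqVneq y z) => [->|yz]; first by exists z.
  have yi : y \in s2 by rewrite m2 yz.
  have ilt : (index y s2 < size s1)%N by rewrite sz index_mem.
  have xi : nth z s1 (index y s2) \in s1 by rewrite mem_nth.
  exists (nth z s1 (index y s2)); first by move: xi; rewrite m1 => /andP[].
  by rewrite /f index_uniq // nth_index.
Qed.

Theorem lemma12 (F : finFieldType) (n : nat) (V1 V1' : 'M[F]_n) :
  (2 <= n)%N ->
  ((0 : 'M[F]_n) < V1)%MS -> (V1 < 1%:M)%MS ->
  ((0 : 'M[F]_n) < V1')%MS -> (V1' < 1%:M)%MS ->
  semigroup_isomorphic (phi2 V1) (phi2 V1') <->
  [:: \rank V1; (n - \rank V1)%N] =i [:: \rank V1'; (n - \rank V1')%N].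
Proof.
move=> _ _ _ _ _.
have kn := rank_leq_row V1; have kn' := rank_leq_row V1'.
move: kn kn'; set k := \rank V1; set k' := \rank V1' => kn kn'.
have F1 : (1 < #|F|)%N.
  by apply/card_gt1P; exists 0, 1; rewrite !inE eq_sym oner_eq0.
have key : semigroup_isomorphic (phi2 V1) (phi2 V1') <->
           ((n - k) * k = (n - k') * k')%N.
  split.
    move=> [f [fS finj fsurj _]].
    apply: (expnI F1); rewrite -!card_phi2 -(card_in_image finj).
    apply: eq_card => y; apply/imageP/idP => [[x xS ->]|/fsurj[x xS <-]].
      exact: fS.
    by exists x.
  move=> E.
  have [f [f0 fS finj fsurj]] := bij0 (phi2_0 V1) (phi2_0 V1')
    (etrans (card_phi2 V1) (etrans (congr1 (expn #|F|) E) (esym (card_phi2 V1')))).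
  exists f; split => // x y xS yS.
  by rewrite (phi2_null xS yS) f0 (phi2_null (fS x xS) (fS y yS)).
rewrite key; split.
  move=> E; have [<-|->] : k = k' \/ k' = (n - k)%N by nia.
    by [].
  by move=> x; rewrite subKn // !inE orbC.
move=> E; have := E k'; rewrite !inE eqxx orTb => /orP[/eqP->|/eqP->] //.
by rewrite subKn // mulnC.
Qed.
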